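(* Let $t$ be a term and $\vec x=x_1\dots x_n$ a vector of pairwise distinct program variables. If $$\vec x(1)=\vec x(2)\ \vdash\ \mathrm{wp}\,[1:t,\ 2:(t;t)]\,\{\vec x(1)=\vec x(2)\}$$ and $t$ is projectable from every store (for every store $s$ there exist $v,s'$ with $t,s\Downarrow v,s'$), then $$\vec x(1)=\vec x(2)\ \vdash\ \mathrm{wp}\,[1:t,2:t]\,\{\vec x(1)=\vec x(2)\}.$$ Moreover, the projectability hypothesis cannot be dropped: there exist a term $t$ and a vector $\vec x$ satisfying the first entailment but not the conclusion.
   Context: Setting. $\mathrm{Val}=\mathbb{Z}$; $\mathrm{PVar}$ is a countably infinite set of program variables; a store is a function $s:\mathrm{PVar}\to\mathrm{Val}$; indices are $\mathrm{Idx}=\mathbb{N}$. Terms of a first-order imperative language are generated by $t ::= v \mid x \mid * \mid t\oplus t \mid \mathtt{skip}\mid x:=t \mid t;t \mid \mathtt{if}\ t\ \mathtt{then}\ t\ \mathtt{else}\ t \mid \mathtt{while}\ t\ \mathtt{do}\ t$ ($\oplus$ primitive operations such as $+,-,<$), with a nondeterministic big-step semantics $t,s\Downarrow v,s'$ ($t$ run from $s$ may terminate with return value $v$ and final store $s'$; $*$ returns an arbitrary integer; nonterminating runs yield no judgment; $t_1;t_2,s\Downarrow v,s''$ iff $t_1,s\Downarrow\_,s'$ and $t_2,s'\Downarrow \_,s''$ for some $s'$). A hyper-term is a finitely supported partial map from $\mathrm{Idx}$ to terms, written $[i_1:t_1,\dots,i_n:t_n]$; a hyper-store is a total function $\mathbf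 s:\mathrm{Idx}\to\mathrm{Store}$. $\mathbf t,\mathbf s\Downarrow\mathbf v,\mathbf s'$ holds iff for every $i\in\mathrm{supp}(\mathbf t)$, $\mathbf t(i),\mathbf s(i)\Downarrow\mathbf v(i),\mathbf s'(i)$, and for every $i\notin\mathrm{supp}(\mathbf t)$, $\mathbf s'(i)=\mathbf s(i)$. A hyper-assertion is a predicate on hyper-stores; $P\vdash R$ means $\forall\mathbf s.\ P(\mathbf s)\Rightarrow R(\mathbf s)$. $\mathrm{wp}\,\mathbf t\,\{Q\}(\mathbf s):\iff\forall\mathbf v,\mathbf s'.\ (\mathbf t,\mathbf s\Downarrow\mathbf v,\mathbf s')\Rightarrow Q(\mathbf s')$ for a hyper-assertion $Q$. $\vec x(i)=\vec x(j)$ is the hyper-assertion $\forall k.\ \mathbf s(i)(x_k)=\mathbf s(j)(x_k)$. *)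

(* Defs.v *)
From Stdlib Require Import ZArith List.
Import ListNotations.
Open Scope Z_scope.

Definition Val := Z.
Definition PVar := nat.
Definition Store := PVar -> Val.
Definition Idx := nat.

Definition upd (s : Store) (x : PVar) (v : Val) : Store :=
  fun y => if Nat.eqb y x then v else s y.

Inductive binop := OAdd | OSub | OMul | OLt | OEq.

Definition eval_op (o : binop) (a b : Z) : Z :=
  match o with
  | OAdd => a + b
  | OSub => a - b
  | OMul => a * b
  | OLt => if Z.ltb a b then 1 else 0
  | OEq => if Z.eqb a b then 1 else 0
  end.

Inductive term :=
  | TVal (v : Val)
  | TVar (x : PVar)
  | TStar
  | TOp (o : binop) (t1 t2 : term)
  | TSkip
  | TAssign (x : PVar) (t : term)
  | TSeq (t1 t2 : term)
  | TIf (c t1 t2 : term)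
  | TWhile (c b : term).

(* nondeterministic big-step semantics t, s ⇓ v, s'.
   Conventions: skip and a terminated while return 0; x := t returns the value
   assigned; a condition is true iff its value is nonzero. *)
Inductive bigstep : term -> Store -> Val -> Store -> Prop :=
  | BVal v s : bigstep (TVal v) s v s
  | BVar x s : bigstep (TVar x) s (s x) s
  | BStar v s : bigstep TStar s v s
  | BOp o t1 t2 s s1 s2 v1 v2 :
      bigstep t1 s v1 s1 -> bigstep t2 s1 v2 s2 ->
      bigstep (TOp o t1 t2) s (eval_op o v1 v2) s2
  | BSkip s : bigstep TSkip s 0 s
  | BAssign x t s v s' :
      bigstep t s v s' -> bigstep (TAssign x t) s v (upd s' x v)
  | BSeq t1 t2 s s1 s2 v1 v2 :
      bigstep t1 s v1 s1 -> bigstep t2 s1 v2 s2 -> bigstep (TSeq t1 t2) s v2 s2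
  | BIfT c t1 t2 s s1 vc v s2 :
      bigstep c s vc s1 -> vc <> 0 -> bigstep t1 s1 v s2 ->
      bigstep (TIf c t1 t2) s v s2
  | BIfF c t1 t2 s s1 v s2 :
      bigstep c s 0 s1 -> bigstep t2 s1 v s2 ->
      bigstep (TIf c t1 t2) s v s2
  | BWhileF c b s s1 :
      bigstep c s 0 s1 -> bigstep (TWhile c b) s 0 s1
  | BWhileT c b s s1 vc vb s2 v s3 :
      bigstep c s vc s1 -> vc <> 0 -> bigstep b s1 vb s2 ->
      bigstep (TWhile c b) s2 v s3 -> bigstep (TWhile c b) s v s3.

(* hyper-terms: partial maps Idx -> term (only finitely supported ones are used) *)
Definition HTerm := Idx -> option term.
Definition HStore := Idx -> Store.
Definition HVal := Idx -> Val.
Definition HAssertion := HStore -> Prop.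

Definition hterm2 (i1 : Idx) (t1 : term) (i2 : Idx) (t2 : term) : HTerm :=
  fun i => if Nat.eqb i i1 then Some t1 else if Nat.eqb i i2 then Some t2 else None.

Definition hbigstep (ht : HTerm) (hs : HStore) (hv : HVal) (hs' : HStore) : Prop :=
  forall i, match ht i with
            | Some ti => bigstep ti (hs i) (hv i) (hs' i)
            | None => hs' i = hs i
            end.

Definition entails (P R : HAssertion) : Prop := forall hs, P hs -> R hs.

Definition wp (ht : HTerm) (Q : HAssertion) : HAssertion :=
  fun hs => forall hv hs', hbigstep ht hs hv hs' -> Q hs'.

Definition vec_eq (xs : list PVar) (i j : Idx) : HAssertion :=
  fun hs => forall k, In k xs -> hs i k = hs j k.

Definition projectable (t : term) : Prop :=
  forall s, exists v s', bigstep t s v s'.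

(* Main.v *)
Require Import Defs.
From Stdlib Require Import ZArith List Lia.

Definition W : term := TWhile (TVar 1%nat) TSkip.
Definition tc : term := TSeq W (TSeq (TAssign 1%nat (TVal 1)) (TAssign 0%nat TStar)).

Lemma W_inv : forall w s v s', bigstep w s v s' -> w = W -> s 1%nat = 0 /\ s' = s.
Proof.
  intros w s v s' H; induction H; intro E; try discriminate.
  - inversion E; subst. inversion H; subst. auto.
  - inversion E; subst. inversion H; subst. inversion H1; subst.
    destruct (IHbigstep3 eq_refl). contradiction.
Qed.

Lemma tc_inv : forall s v s', bigstep tc s v s' -> s 1%nat = 0 /\ s' 1%nat = 1.
Proof.
  intros s v s' H. inversion H; subst. match goal with Hw : bigstep W _ _ _ |- _ => destruct (W_inv _ _ _ _ Hw eq_refl) as [? ->] end. split; auto. clear H H2. inversion H6; subst.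
  match goal with Ha : bigstep (TAssign 0%nat TStar) _ _ _ |- _ => inversion Ha; subst end.
  unfold upd; simpl.
  match goal with Ha : bigstep (TAssign 1%nat _) _ _ _ |- _ => inversion Ha; subst end.
  match goal with Ha : bigstep TStar _ _ _ |- _ => inversion Ha; subst end.
  match goal with Ha : bigstep (TVal _) _ _ _ |- _ => inversion Ha; subst end.
  unfold upd; simpl. reflexivity.
Qed.

Theorem mainTheorem20 :
  (forall (t : term) (xs : list PVar),
      NoDup xs ->
      entails (vec_eq xs 1%nat 2%nat) (wp (hterm2 1%nat t 2%nat (TSeq t t)) (vec_eq xs 1%nat 2%nat)) ->
      projectable t ->
      entails (vec_eq xs 1%nat 2%nat) (wp (hterm2 1%nat t 2%nat t) (vec_eq xs 1%nat 2%nat)))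
  /\
  (exists (t : term) (xs : list PVar),
      NoDup xs /\
      entails (vec_eq xs 1%nat 2%nat) (wp (hterm2 1%nat t 2%nat (TSeq t t)) (vec_eq xs 1%nat 2%nat)) /\
      ~ entails (vec_eq xs 1%nat 2%nat) (wp (hterm2 1%nat t 2%nat t) (vec_eq xs 1%nat 2%nat))).
Proof.
  split.
  - intros t xs _ Hyp Hp hs Heq hv hs' Hb.
    pose proof (Hb 1%nat) as H1. pose proof (Hb 2%nat) as H2. simpl in H1, H2.
    destruct (Hp (hs' 2%nat)) as [vc [c Hc]].
    assert (G : forall s1 s2 a b, vec_eq xs 1%nat 2%nat (fun i => if Nat.eqb i 1 then s1 else s2) ->
               forall va vb, bigstep t s1 va a -> bigstep (TSeq t t) s2 vb b ->
               forall k, In k xs -> a k = b k).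
    { intros s1 s2 a b E va vb Ha Hb' k Hk.
      specialize (Hyp _ E (fun i => if Nat.eqb i 1 then va else vb)
                    (fun i => if Nat.eqb i 1 then a else if Nat.eqb i 2 then b else s2)).
      refine (Hyp _ k Hk).
      intro i. unfold hterm2. destruct (Nat.eqb i 1) eqn:E1.
      - apply Nat.eqb_eq in E1; subst; exact Ha.
      - destruct (Nat.eqb i 2) eqn:E2.
        + apply Nat.eqb_eq in E2; subst. exact Hb'.
        + reflexivity. }
    intros k Hk.
    assert (A : hs' 1%nat k = c k).
    { apply (G (hs 1%nat) (hs 2%nat) _ _ Heq (hv 1%nat) vc H1); auto.
      econstructor; eauto. }
    assert (B : hs' 2%nat k = c k).
    { apply (G (hs 2%nat) (hs 2%nat) _ _ ltac:(intros ? ?; reflexivity) (hv 2%nat) vc H2); auto.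
      econstructor; eauto. }
    congruence.
  - exists tc, (0%nat :: nil). split; [constructor; [simpl; tauto|constructor]|split].
    + intros hs _ hv hs' Hb. pose proof (Hb 2%nat) as H2. simpl in H2.
      inversion H2; subst. repeat match goal with Ha : bigstep tc _ _ _ |- _ => apply tc_inv in Ha end. lia.
    + intro Hc.
      set (s0 := fun _ : PVar => 0%Z).
      set (r := fun z : Z => upd (upd s0 1%nat 1) 0%nat z).
      assert (R : forall z, bigstep tc s0 z (r z)).
      { intro z. econstructor.
        - apply BWhileF. apply (BVar 1%nat s0).
        - econstructor. econstructor. constructor. econstructor. constructor. }
      specialize (Hc (fun _ => s0) ltac:(intros ? ?; reflexivity)
                   (fun i => if Nat.eqb i 1 then 1%Z else 2%Z)
                   (fun i => if Nat.eqb i 1 then r 1%Z else if Nat.eqb i 2 then r 2%Z else s0)).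
      assert (X : hbigstep (hterm2 1%nat tc 2%nat tc) (fun _ => s0)
                   (fun i => if Nat.eqb i 1 then 1%Z else 2%Z)
                   (fun i => if Nat.eqb i 1 then r 1%Z else if Nat.eqb i 2 then r 2%Z else s0)).
      { intro i. unfold hterm2. destruct (Nat.eqb i 1); [apply R|].
        destruct (Nat.eqb i 2); [apply R|reflexivity]. }
      specialize (Hc X 0%nat (or_introl eq_refl)).
      simpl in Hc. unfold r, upd in Hc. simpl in Hc. discriminate.
Qed.
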